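(* Let $\mathcal S,\mathcal W,\mathcal Z$ be measurable spaces and let $S,W,Z$ be the coordinate projections from $\mathcal S\times\mathcal W\times\mathcal Z$ onto $\mathcal S,\mathcal W,\mathcal Z$. Then the set $\{\pi\in\mathcal P(\mathcal S\times\mathcal W\times\mathcal Z): S\perp\!\!\!\perp_Z W \text{ under }\pi\}$ is closed under convergence in total variation, where $\mathcal P(\mathcal S\times\mathcal W\times\mathcal Z)$ is the set of probability measures on the product $\sigma$-algebra.
   Context: $S\perp\!\!\!\perp_Z W$ under $\pi$ means $\pi[S\in A,W\in B\mid Z]=\pi[S\in A\mid Z]\,\pi[W\in B\mid Z]$ $\pi$-a.s. for all measurable $A\subseteq\mathcal S$, $B\subseteq\mathcal W$ (equivalently $\pi[S\in A\mid W,Z]=\pi[S\in A\mid Z]$ $\pi$-a.s. for all measurable $A$). Convergence in total variation means $\sup_{C}|\pi^k(C)-\pi(C)|\to0$ over measurable sets $C$. *)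

(* Defs.v *)
From HB Require Import structures.
From mathcomp Require Import all_boot all_order all_algebra.
From mathcomp Require Import all_classical all_reals all_analysis.
Set Implicit Arguments. Unset Strict Implicit. Unset Printing Implicit Defensive.
Import Order.TTheory GRing.Theory Num.Theory.
Local Open Scope classical_set_scope.
Local Open Scope ring_scope.

(* The sample space is S * (W * Z) with the product sigma-algebra; the
   coordinate projections are  x.1 (S),  x.2.1 (W),  x.2.2 (Z). *)
Section Defs.
Context {dS dW dZ : measure_display}
  {S : measurableType dS} {W : measurableType dW} {Z : measurableType dZ}
  {R : realType}.

Definition triple := (S * (W * Z))%type.

(* [h] (a measurable function of z) is a version of the conditional
   probability  pi[ E | Z ], i.e. h o Z is sigma(Z)-measurable, integrable,
   and  int_{Z in C} h(Z) dpi = pi(E, Z in C)  for every measurable C. *)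
Definition is_condprob (pi : probability triple R) (E : set triple)
    (h : Z -> R) : Prop :=
  measurable_fun setT h /\
  pi.-integrable setT (fun x : triple => (h x.2.2)%:E) /\
  forall C : set Z, measurable C ->
    (\int[pi]_(x in [set x : triple | C x.2.2]) (h x.2.2)%:E =
     pi (E `&` [set x : triple | C x.2.2]))%E.

(* S is conditionally independent of W given Z under pi:
   pi[S in A, W in B | Z] = pi[S in A | Z] pi[W in B | Z]  pi-a.s. *)
Definition cond_indep_SW_Z (pi : probability triple R) : Prop :=
  forall (A : set S) (B : set W), measurable A -> measurable B ->
  forall hA hB hAB : Z -> R,
    is_condprob pi [set x : triple | A x.1] hA ->
    is_condprob pi [set x : triple | B x.2.1] hB ->
    is_condprob pi [set x : triple | A x.1 /\ B x.2.1] hAB ->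
    {ae pi, forall x : triple, hAB x.2.2 = hA x.2.2 * hB x.2.2}.

Definition tv_dist (pi1 pi2 : probability triple R) : \bar R :=
  ereal_sup [set `|(pi1 C - pi2 C)%E|%E | C in [set C : set triple | measurable C]].

Definition tv_converges (pik : nat -> probability triple R)
    (pi : probability triple R) : Prop :=
  (fun k => tv_dist (pik k) pi) @ \oo --> 0%E.

End Defs.

(* Main.v *)
Require Import Defs.
From HB Require Import structures.
From mathcomp Require Import all_boot all_order all_algebra.
From mathcomp Require Import all_classical all_reals all_analysis.
From mathcomp Require Import measurable_realfun.
Set Implicit Arguments. Unset Strict Implicit. Unset Printing Implicit Defensive.
Import Order.TTheory GRing.Theory Num.Theory.
Local Open Scope classical_set_scope.
Local Open Scope ring_scope.

From mathcomp Require Import ring lra.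
Section Infra.
Context {d : measure_display} {T : measurableType d} {R : realType}.

Definition bm (F : T -> R) :=
  measurable_fun setT F /\ exists M : R, forall x, `|F x| <= M.

Lemma bm_int (P : probability T R) F : bm F -> P.-integrable setT (EFin \o F).
Proof.
move=> [mF [M hM]]; apply/integrableP; split; first exact/measurable_EFinP.
have hI : (\int[P]_(x in setT) M%:E = M%:E * P setT)%E by exact: integral_cst.
apply: (@le_lt_trans _ _ (\int[P]_(x in setT) (M%:E))%E); last first.
  by rewrite hI probability_setT mule1 ltry.
apply: ge0_le_integral => //.
- by do 2 apply: measurableT_comp => //.
- by move=> x _; rewrite lee_fin (le_trans _ (hM x)).
Qed.

Definition Ip (P : probability T R) (F : T -> R) := \int[P]_x F x.

Lemma bm_cst c : bm (fun _ => c).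
Proof. by split; [exact: measurable_cst | exists `|c|]. Qed.

Lemma bm_indic (G : set T) : measurable G -> bm (\1_G).
Proof.
move=> mG; split; first exact: measurable_indic.
by exists 1 => x; rewrite /indic; case: (_ \in _) => /=; rewrite ?normr0 ?normr1.
Qed.

Lemma bmD F G : bm F -> bm G -> bm (fun x => F x + G x).
Proof.
move=> [mF [M hM]] [mG [N hN]]; split; first exact: measurable_funD.
by exists (M + N) => x; rewrite (le_trans (ler_normD _ _))// lerD.
Qed.

Lemma bmN F : bm F -> bm (fun x => - F x).
Proof.
move=> [mF [M hM]]; split; first exact: measurable_funN.
by exists M => x; rewrite normrN.
Qed.

Lemma bmB F G : bm F -> bm G -> bm (fun x => F x - G x).
Proof. by move=> hF hG; apply: bmD => //; exact: bmN. Qed.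

Lemma bmM F G : bm F -> bm G -> bm (fun x => F x * G x).
Proof.
move=> [mF [M hM]] [mG [N hN]]; split; first exact: measurable_funM.
exists (M * N) => x; rewrite normrM ler_pM//.
Qed.

Lemma bm_sum (F : nat -> T -> R) n : (forall j, bm (F j)) ->
  bm (fun x => \sum_(j < n) F j x).
Proof.
move=> hF; elim: n => [|n IH].
  by under [X in bm X]funext do rewrite big_ord0; exact: bm_cst.
under [X in bm X]funext do rewrite big_ord_recr /=.
exact: bmD.
Qed.

Variable P : probability T R.

Lemma IpD F G : bm F -> bm G -> Ip P (fun x => F x + G x) = Ip P F + Ip P G.
Proof. by move=> hF hG; rewrite /Ip RintegralD//; exact: bm_int. Qed.

Lemma IpB F G : bm F -> bm G -> Ip P (fun x => F x - G x) = Ip P F - Ip P G.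
Proof. by move=> hF hG; rewrite /Ip RintegralB//; exact: bm_int. Qed.

Lemma IpZ c F : bm F -> Ip P (fun x => c * F x) = c * Ip P F.
Proof. by move=> hF; rewrite /Ip RintegralZl//; exact: bm_int. Qed.

Lemma Ip_le F G : bm F -> bm G -> (forall x, F x <= G x) -> Ip P F <= Ip P G.
Proof. by move=> hF hG FG; rewrite /Ip le_Rintegral//; exact: bm_int. Qed.

Lemma Ip_cst c : Ip P (fun _ => c) = c.
Proof.
rewrite /Ip Rintegral_cst//.
have -> : fine (P setT) = 1 by exact: (congr1 fine (probability_setT P)).
by rewrite mulr1.
Qed.

Lemma Ip_indic G : measurable G -> Ip P (\1_G) = fine (P G).
Proof. by move=> mG; rewrite /Ip /Rintegral integral_indic// setIT. Qed.

Lemma Ip_sum (F : nat -> T -> R) n : (forall j, bm (F j)) ->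
  Ip P (fun x => \sum_(j < n) F j x) = \sum_(j < n) Ip P (F j).
Proof.
move=> hF; elim: n => [|n IH].
  by under [X in Ip _ X]funext do rewrite big_ord0; rewrite big_ord0 Ip_cst.
under [X in Ip _ X]funext do rewrite big_ord_recr /=.
by rewrite IpD ?big_ord_recr ?IH//; exact: bm_sum.
Qed.

Lemma Ip_bound F M : bm F -> (forall x, `|F x| <= M) -> `|Ip P F| <= M.
Proof.
move=> hF hM; rewrite ler_norml; apply/andP; split.
  by rewrite -(Ip_cst (- M)); apply: Ip_le => //; [exact: bm_cst|move=> x; have := hM x; rewrite ler_norml => /andP[]].
by rewrite -(Ip_cst M); apply: Ip_le => //; [exact: bm_cst|move=> x; have := hM x; rewrite ler_norml => /andP[]].
Qed.

End Infra.

Section Count.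
Context {R : realType}.

Definition cnt n (y : R) := \sum_(j < n) ((j.+1%:R <= y)%R)%:R : R.

Lemma addb_le (x y : R) (b : bool) : (b -> x + 1 <= y) -> (~~ b -> x <= y) ->
  x + b%:R <= y.
Proof. by case: b => [h _|_ h]; [exact: h|rewrite addr0; exact: h]. Qed.

Lemma addb_ge (x y : R) (b : bool) : (b -> y <= x + 1) -> (~~ b -> y <= x) ->
  y <= x + b%:R.
Proof. by case: b => [h _|_ h]; [exact: h|rewrite addr0; exact: h]. Qed.

Lemma cnt_le_n n y : cnt n y <= n%:R.
Proof.
rewrite /cnt; apply: (@le_trans _ _ (\sum_(j < n) (1:R))).
  by apply: ler_sum => j _; rewrite lern1 leq_b1.
by rewrite sumr_const card_ord.
Qed.

Lemma cnt_up n y : 0 <= y -> cnt n y <= y.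
Proof.
move=> y0; elim: n => [|n IH]; first by rewrite /cnt big_ord0.
rewrite /cnt big_ord_recr /=; apply: addb_le => [hn|_]; last exact: IH.
by rewrite (le_trans _ hn)// -natr1 lerD// cnt_le_n.
Qed.

Lemma cnt_low n y : y <= n%:R -> y - 1 <= cnt n y.
Proof.
elim: n y => [|n IH] y hy.
  by rewrite /cnt big_ord0 subr_le0 (le_trans hy)// ler01.
rewrite /cnt big_ord_recr /=.
have [yn|ny] := leP y n%:R.
  by apply: addb_ge => _; rewrite (le_trans (IH _ yn))// lerDl.
have -> : \sum_(i < n) (((i.+1)%:R <= y)%R)%:R = (n%:R : R).
  rewrite (eq_bigr (fun _ => 1)); first by rewrite sumr_const card_ord.
  move=> i _; rewrite (_ : (_ <= _) = true)// (le_trans _ (ltW ny))//.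
  by rewrite ler_nat ltn_ord.
have hy' : y <= n%:R + 1 by rewrite natr1.
apply: addb_ge.
  move=> _; rewrite lerBlDr; apply: (le_trans hy'); rewrite lerD// lerDl//.
move=> _; rewrite lerBlDr; apply: (le_trans hy'); rewrite lerD//.
Qed.

End Count.

Section T2.
Context {d : measure_display} {T : measurableType d} {R : realType}.

Lemma T2 (mu nu : probability T R) (eps : R) (F : T -> R) :
  (forall G, measurable G -> `|fine (mu G) - fine (nu G)| <= eps) ->
  measurable_fun setT F -> (forall x, 0 <= F x <= 1) ->
  `|Ip mu F - Ip nu F| <= eps.
Proof.
move=> hG mF F01.
have bF : bm F by split=> //; exists 1 => x; have /andP[? ?] := F01 x; rewrite ger0_norm.
apply/ler_addgt0Pr => e e0.
pose n := (Num.Def.trunc (2 / e)).+1.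
have n0 : (0 < n%:R :> R) by rewrite ltr0n.
have ne : 2 / n%:R <= e.
  rewrite ler_pdivrMr// mulrC -ler_pdivrMr//.
  exact/ltW/truncnS_gt.
pose G j := [set x | j.+1%:R <= n%:R * F x].
have mG j : measurable (G j).
  have mnF : measurable_fun setT (fun x => n%:R * F x).
    by apply: measurable_funM => //; exact: measurable_cst.
  have := mnF measurableT _ (measurable_itv `[j.+1%:R, +oo[).
  rewrite setTI; congr measurable; apply/seteqP; split => x /=;
    by rewrite in_itv /= andbT.
pose Fn (x : T) : R := n%:R^-1 * \sum_(j < n) \1_(G j) x.
have cntE x : \sum_(j < n) \1_(G j) x = cnt n (n%:R * F x).
  apply: eq_bigr => j _; rewrite indicE; congr ((nat_of_bool _)%:R).
  by apply/idP/idP => [/set_mem|h]; [|apply/mem_set].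
have bFn : bm Fn.
  apply: (@bmM _ _ _ (fun _ => n%:R^-1) (fun x => \sum_(j < n) \1_(G j) x)).
    exact: bm_cst.
  by apply: (@bm_sum _ _ _ (fun j => \1_(G j))) => j; exact: bm_indic.
have Fn_le x : `|F x - Fn x| <= n%:R^-1.
  have /andP[F0 F1] := F01 x.
  rewrite /Fn cntE ger0_norm.
    rewrite lerBlDl -lerBlDr -[X in X - _](mulKf (lt0r_neq0 n0) (F x)).
    rewrite -[X in _ - X <= _]mulr1 -mulrBr ler_pM2l ?invr_gt0//.
    by rewrite cnt_low// ler_piMr.
  rewrite subr_ge0 -[X in _ <= X](mulKf (lt0r_neq0 n0) (F x)) ler_pM2l ?invr_gt0//.
  by rewrite cnt_up// mulr_ge0.
have IpFn (P : probability T R) : Ip P Fn = n%:R^-1 * \sum_(j < n) fine (P (G j)).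
  rewrite /Fn IpZ; last by apply: (@bm_sum _ _ _ (fun j => \1_(G j))) => j; exact: bm_indic.
  rewrite (@Ip_sum _ _ _ _ (fun j => \1_(G j))); last by move=> j; exact: bm_indic.
  by congr (_ * _); apply: eq_bigr => j _; rewrite Ip_indic.
have errP (P : probability T R) : `|Ip P F - Ip P Fn| <= n%:R^-1.
  by rewrite -IpB//; apply: Ip_bound => //; exact: bmB.
have mid : `|Ip mu Fn - Ip nu Fn| <= eps.
  rewrite !IpFn -mulrBr normrM ger0_norm ?invr_ge0//.
  rewrite -sumrB ler_pdivrMl// (le_trans (ler_norm_sum _ _ _))//.
  apply: (@le_trans _ _ (\sum_(j < n) eps)); first by apply: ler_sum => j _; exact: hG.
  by rewrite sumr_const card_ord mulr_natl.
have -> : Ip mu F - Ip nu F =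
  (Ip mu F - Ip mu Fn) + (Ip mu Fn - Ip nu Fn) - (Ip nu F - Ip nu Fn).
  by ring.
apply: (le_trans (ler_normB _ _)); apply: (le_trans (lerD (ler_normD _ _) (errP nu))).
have := errP mu; lra.
Qed.

End T2.

Section G0.
Context {d : measure_display} {U : measurableType d} {R : realType}.

Lemma G0 (P : {measure set U -> \bar R}) (D : set U) (f : U -> R) :
  measurable D -> P.-integrable D (EFin \o f) -> (forall x, D x -> 0 < f x) ->
  (\int[P]_(x in D) (f x)%:E <= 0)%E -> P D = 0.
Proof.
move=> mD fi fpos hle.
have h0 : (\int[P]_(x in D) `|(EFin \o f) x| = 0)%E.
  rewrite (eq_integral (fun x => (f x)%:E)); last first.
    by move=> x /set_mem Dx /=; rewrite ger0_norm// ltW// fpos.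
  apply/eqP; rewrite eq_le hle integral_ge0// => x Dx; rewrite lee_fin ltW// fpos//.
have [N [mN PN0 sN]] := (ae_eq_integral_abs P mD (measurable_int _ fi)).1 h0.
apply: (subset_measure0 mD mN) => // x Dx; apply: sN => /= /(_ Dx) [] /eqP.
by rewrite gt_eqF// fpos.
Qed.

Lemma intB_EFin (P : {measure set U -> \bar R}) (D : set U) (f g : U -> R) :
  measurable D -> P.-integrable D (EFin \o f) -> P.-integrable D (EFin \o g) ->
  P.-integrable D (EFin \o (fun x => f x - g x)).
Proof.
move=> mD fi gi.
rewrite (_ : EFin \o _ = (fun x => (f x)%:E - (g x)%:E)%E); last first.
  by apply/funext => x /=; rewrite EFinB.
exact: integrableB.
Qed.

Lemma mlt (h : U -> R) c : measurable_fun setT h -> measurable [set z | h z < c].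
Proof.
move=> mh; have := mh measurableT _ (measurable_itv `]-oo, c[).
by rewrite setTI; congr measurable; apply/seteqP; split => x /=; rewrite in_itv.
Qed.

Lemma mgt (h : U -> R) c : measurable_fun setT h -> measurable [set z | c < h z].
Proof.
move=> mh; have := mh measurableT _ (measurable_itv `]c, +oo[).
by rewrite setTI; congr measurable; apply/seteqP; split => x /=; rewrite in_itv /= andbT.
Qed.

End G0.

Section Versions.
Context {dS dW dZ : measure_display}
  {S : measurableType dS} {W : measurableType dW} {Z : measurableType dZ}
  {R : realType}.
Local Notation T := (@triple dS dW dZ S W Z).

Definition zpre (C : set Z) : set T := [set x : T | C x.2.2].

Lemma mz : measurable_fun setT (fun x : T => x.2.2).
Proof. exact: measurableT_comp. Qed.

Lemma mzpre C : measurable C -> measurable (zpre C).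
Proof. by move=> mC; have := mz measurableT mC; rewrite setTI. Qed.

Lemma L0 (P : probability T R) E (h : Z -> R) : measurable E ->
  is_condprob P E h -> {ae P, forall x : T, 0 <= h x.2.2 <= 1}.
Proof.
move=> mE [mh [hi hC]].
have mhz : measurable_fun setT (fun x : T => h x.2.2) := measurableT_comp mh mz.
pose C1 := [set z | h z < 0]; pose C2 := [set z | 1 < h z].
have mC1 : measurable C1 by exact: mlt.
have mC2 : measurable C2 by exact: mgt.
have mD1 := mzpre mC1; have mD2 := mzpre mC2.
have hiD D : measurable D -> P.-integrable D (fun x : T => (h x.2.2)%:E).
  by move=> mD; apply: integrableS hi.
have ci (c : R) D : measurable D -> P.-integrable D (EFin \o (fun _ : T => c)).
  move=> mD; apply: integrableS (bm_int P (bm_cst c)) => //.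
have P1 : P (zpre C1) = 0.
  apply: (@G0 _ _ _ P _ (fun x : T => 0 - h x.2.2)) => //.
  - by apply: intB_EFin => //; [exact: (ci 0 _ mD1)|exact: hiD].
  - by move=> x /= hx; rewrite sub0r oppr_gt0.
  - rewrite (eq_integral (fun x : T => ((0:R)%:E - (h x.2.2)%:E)%E)); last first.
      by move=> x _; rewrite EFinB.
    rewrite integralB_EFin//; [|exact: (ci 0 _ mD1)|exact: hiD].
    rewrite integral0 sub0e hC// leeNl oppe0.
    exact: measure_ge0.
have P2 : P (zpre C2) = 0.
  apply: (@G0 _ _ _ P _ (fun x : T => h x.2.2 - 1)) => //.
  - by apply: intB_EFin => //; [exact: hiD|exact: (ci 1 _ mD2)].
  - by move=> x /= hx; rewrite subr_gt0.
  - rewrite (eq_integral (fun x : T => ((h x.2.2)%:E - (1:R)%:E)%E)); last first.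
      by move=> x _; rewrite EFinB.
    rewrite integralB_EFin//; [|exact: hiD|exact: (ci 1 _ mD2)].
    rewrite hC// integral_cst// mul1e sube_le0.
    by apply: le_measure => //; rewrite inE//; exact: measurableI.
exists (zpre C1 `|` zpre C2); split.
- exact: measurableU.
- by rewrite measureU0.
- move=> x /= hx; rewrite /zpre /C1 /C2 /=.
  have [h0|h0] := ltP (h x.2.2) 0; first by left.
  have [h1|h1] := ltP 1 (h x.2.2); first by right.
  by exfalso; apply: hx; rewrite h0 h1.
Qed.

End Versions.

Section Clip.
Context {dS dW dZ : measure_display}
  {S : measurableType dS} {W : measurableType dW} {Z : measurableType dZ}
  {R : realType}.
Local Notation T := (@triple dS dW dZ S W Z).

Definition clip (h : Z -> R) : Z -> R := (h \max cst 0) \min cst 1.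

Lemma clip01 h z : 0 <= clip h z <= 1.
Proof.
rewrite /clip /=; apply/andP; split.
  by rewrite le_min ler01 le_max lexx orbT.
by rewrite ge_min lexx orbT.
Qed.

Lemma clip_id h z : 0 <= h z <= 1 -> clip h z = h z.
Proof.
move=> /andP[h0 h1]; rewrite /clip /=.
by rewrite (@max_l _ _ (h z) 0)// (@min_l _ _ (h z) 1).
Qed.

Lemma mclip h : measurable_fun setT h -> measurable_fun setT (clip h).
Proof.
move=> mh; apply: measurable_minr; last exact: measurable_cst.
by apply: measurable_maxr => //; exact: measurable_cst.
Qed.

Definition good (g : Z -> R) := measurable_fun setT g /\ forall z, 0 <= g z <= 1.

Lemma bmz (g : Z -> R) : good g -> bm (fun x : T => g x.2.2).
Proof.
move=> [mg g01]; split; first exact: (measurableT_comp mg mz).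
by exists 1 => x; have /andP[? ?] := g01 x.2.2; rewrite ger0_norm.
Qed.

Lemma good_clip h : measurable_fun setT h -> good (clip h).
Proof. by move=> mh; split; [exact: mclip|exact: clip01]. Qed.

Lemma clip_version (P : probability T R) E h : measurable E ->
  is_condprob P E h ->
  is_condprob P E (clip h) /\ {ae P, forall x : T, h x.2.2 = clip h x.2.2}.
Proof.
move=> mE hv; have hae := L0 mE hv.
have ae1 : {ae P, forall x : T, h x.2.2 = clip h x.2.2}.
  by apply: filterS hae => x /clip_id ->.
have [mh [hi hC]] := hv.
have gc := good_clip mh.
split=> //; split; first exact: mclip.
split; first by apply: bm_int; exact: bmz.
move=> C mC; rewrite -hC//.
apply: ae_eq_integral.
- exact: mzpre.
- apply: measurable_funTS; apply/measurable_EFinP; exact: (measurableT_comp (mclip mh) mz).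
- apply: measurable_funTS; apply/measurable_EFinP; exact: (measurableT_comp mh mz).
- by apply: filterS ae1 => x -> _.
Qed.

Lemma Conv (P : probability T R) E g C : good g -> is_condprob P E g ->
  measurable C ->
  Ip P (fun x => g x.2.2 * \1_(zpre C) x) = fine (P (E `&` zpre C)).
Proof.
move=> gg [_ [_ hC]] mC.
rewrite -hC// /Ip.
change (\int[P]_x (g x.2.2 * \1_(zpre C) x) = \int[P]_(x in zpre C) g x.2.2).
rewrite [RHS]Rintegral_mkcond; apply: eq_Rintegral => x _.
rewrite patchE indicE; case: (x \in zpre C).
  by rewrite mulr1.
by rewrite mulr0.
Qed.

End Clip.

Section Exist.
Context {dS dW dZ : measure_display}
  {S : measurableType dS} {W : measurableType dW} {Z : measurableType dZ}
  {R : realType}.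
Local Notation T := (@triple dS dW dZ S W Z).

Definition zproj (x : T) : Z := x.2.2.
HB.instance Definition _ := isMeasurableFun.Build _ _ _ _ zproj mz.

Variables (P : probability T R) (E : set T) (mE : measurable E).

Definition nuE (C : set Z) : \bar R := P (E `&` zpre C).

Let nuE0 : nuE set0 = 0%E.
Proof.
by rewrite /nuE (_ : zpre set0 = set0) ?setI0 ?measure0//; apply/seteqP; split => x.
Qed.

Let nuE_ge0 C : (0 <= nuE C)%E.
Proof. exact: measure_ge0. Qed.

Let nuE_sa : semi_sigma_additive nuE.
Proof.
move=> F mF tF mUF; rewrite /nuE.
have -> : E `&` zpre (\bigcup_n F n) = \bigcup_n (E `&` zpre (F n)).
  by apply/seteqP; split => [x [Ex [n _ Fx]]|x [n _ [Ex Fx]]];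
    [exists n => //|split => //; exists n].
apply: measure_semi_sigma_additive.
- by move=> n; apply: measurableI => //; exact: mzpre.
- apply/trivIsetP => i j _ _ ij.
  move/trivIsetP : tF => /(_ _ _ Logic.I Logic.I ij) Fij.
  apply/seteqP; split => // x [[_ Fi] [_ Fj]].
  by have : (F i `&` F j) x.2.2 by []; rewrite Fij.
- by apply: bigcup_measurable => n _; apply: measurableI => //; exact: mzpre.
Qed.

HB.instance Definition _ := isMeasure.Build _ _ _ nuE nuE0 nuE_ge0 nuE_sa.

Let nuE_fin : fin_num_fun nuE.
Proof.
move=> C mC; rewrite ge0_fin_numE ?measure_ge0//.
rewrite (le_lt_trans _ (ltry 1)) //.
have <- : P setT = 1%E by exact: probability_setT.
apply: le_measure => //; rewrite inE//.
by apply: measurableI => //; exact: mzpre.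
Qed.

HB.instance Definition _ := Measure_isFinite.Build _ _ _ nuE nuE_fin.

Lemma exists_version : exists h, is_condprob P E h.
Proof.
pose mu := distribution P zproj.
have dom : nuE `<< mu.
  apply/null_content_dominatesP => C mC mu0.
  apply/eqP; rewrite -measure_le0 -mu0.
  apply: le_measure; rewrite ?inE//; first by apply: measurableI => //; exact: mzpre.
  exact: mzpre.
have [f [f0 fi fE]] := radon_nikodym_finite dom.
pose h z := fine (f z).
have mf := measurable_int _ fi.
have mh : measurable_fun setT h.
  by apply: measurableT_comp => //; exact: fine_measurable.
have aef : {ae mu, forall z, (h z)%:E = f z}.
  have := integrable_ae measurableT fi; apply: filterS => z /(_ Logic.I).
  by move=> zf; rewrite /h fineK.
have hi : mu.-integrable setT (EFin \o h).
  apply/integrableP; split; first exact/measurable_EFinP.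
  rewrite (ae_eq_integral (fun z => `|f z|)%E) //.
  - by case/integrableP : fi.
  - by apply: measurableT_comp => //; exact/measurable_EFinP.
  - exact: measurableT_comp.
  - by apply: filterS aef => z hz _; exact: (congr1 abse hz).
have hPi : P.-integrable setT (fun x : T => (h x.2.2)%:E).
  apply/integrableP; split.
    by apply/measurable_EFinP; exact: (measurableT_comp mh mz).
  have := (integrableP _ _ _ hi).2.
  rewrite ge0_integral_pushforward//.
  by apply: measurableT_comp => //; exact/measurable_EFinP.
exists h; split=> //; split=> // C mC.
change (\int[P]_(x in [set x | C x.2.2]) (h x.2.2)%:E = nuE C)%E; rewrite fE//.
transitivity (\int[mu]_(z in C) (h z)%:E)%E.
  rewrite (integral_pushforward mz)//.
  - exact/measurable_EFinP.
  - by apply: integrableS hPi => //; exact: mzpre.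
apply: ae_eq_integral => //.
- exact/measurable_funTS/measurable_EFinP.
- exact: measurable_funTS.
- by apply: filterS aef => z -> _.
Qed.

End Exist.

Lemma exists_good {dS dW dZ : measure_display}
  {S : measurableType dS} {W : measurableType dW} {Z : measurableType dZ}
  {R : realType} (P : probability (@triple dS dW dZ S W Z) R) E :
  measurable E -> exists g, good g /\ is_condprob P E g.
Proof.
move=> mE; have [h hv] := exists_version P mE.
have [cv _] := clip_version mE hv.
exists (clip h); split=> //; apply: good_clip; by case: hv.
Qed.

Section Main1.
Context {dS dW dZ : measure_display}
  {S : measurableType dS} {W : measurableType dW} {Z : measurableType dZ}
  {R : realType}.
Local Notation T := (@triple dS dW dZ S W Z).

Lemma TVeps (pik : nat -> probability T R) (pi : probability T R) :
  tv_converges pik pi -> forall eps : R, 0 < eps ->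
  exists k, forall G, measurable G -> `|fine (pik k G) - fine (pi G)| <= eps.
Proof.
move=> /fine_cvgP [hfin hcvg] eps e0.
have hnear : \forall k \near \oo, `|fine (tv_dist (pik k) pi)| < eps.
  by move/cvgr0Pnorm_lt : hcvg; apply.
have [N _ HN] := filterS2 _ (fun k a b => conj a b) hfin hnear.
have [tfin tlt] := HN N (leqnn N).
exists N => G mG.
have hsup : (`|(pik N G - pi G)%E| <= tv_dist (pik N) pi)%E.
  by apply: ereal_sup_ubound; exists G.
rewrite -(fineK tfin) -(fineK (fin_num_measure _ _ mG)) in hsup.
rewrite -[X in (_ - X)%E](fineK (fin_num_measure pi _ mG)) in hsup.
rewrite -EFinB /= lee_fin in hsup.
apply: (le_trans hsup); apply: (le_trans (ler_norm _)).
exact: ltW.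
Qed.

Lemma Ip_ae (P : probability T R) (f g : T -> R) : bm f -> bm g ->
  {ae P, forall x, f x = g x} -> Ip P f = Ip P g.
Proof.
move=> [mf _] [mg _] fg; rewrite /Ip /Rintegral; congr fine.
apply: ae_eq_integral => //.
- exact/measurable_EFinP.
- exact/measurable_EFinP.
- by apply: filterS fg => x -> _.
Qed.

Lemma Ip_set (P : probability T R) (f : T -> R) (D : set T) : bm f ->
  measurable D ->
  (\int[P]_(x in D) (f x)%:E)%E = (Ip P (fun x => f x * \1_D x))%:E.
Proof.
move=> bf mD.
have -> : Ip P (fun x => f x * \1_D x) = \int[P]_(x in D) f x.
  rewrite /Ip [RHS]Rintegral_mkcond; apply: eq_Rintegral => x _.
  rewrite patchE indicE; case: (x \in D).
    by rewrite mulr1.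
  by rewrite mulr0.
rewrite /Rintegral fineK//; apply: integrable_fin_num => //.
apply: integrableS (bm_int P bf) => //.
Qed.

End Main1.

Section Main2.
Context {dS dW dZ : measure_display}
  {S : measurableType dS} {W : measurableType dW} {Z : measurableType dZ}
  {R : realType}.
Local Notation T := (@triple dS dW dZ S W Z).

Lemma indz (D : set Z) (x : T) : \1_(zpre D) x = \1_D x.2.2 :> R.
Proof. by rewrite !indicE. Qed.

Lemma ind01 (D : set Z) z : \1_D z = 0 :> R \/ \1_D z = 1 :> R.
Proof. by rewrite indicE; case: (z \in D); [right|left]. Qed.

Lemma split_ind (C U : set Z) z :
  (\1_(C `&` U) z = \1_C z :> R /\ \1_(C `&` ~` U) z = 0 :> R /\ U z) \/
  (\1_(C `&` ~` U) z = \1_C z :> R /\ \1_(C `&` U) z = 0 :> R /\ ~ U z).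
Proof.
rewrite !indicE !in_setI in_setC.
case: (boolP (z \in U)) => hU.
  by left; rewrite andbT andbF; split => //; split => //; exact: set_mem.
right; rewrite andbT andbF; split => //; split => //.
by move=> Uz; move/negP: hU; apply; exact: mem_set.
Qed.

Lemma WL (Q : probability T R) (u w : Z -> R) (C : set Z) (delta : R) :
  measurable_fun setT u -> (forall z, `|u z| <= 1) -> good w -> measurable C ->
  (forall D, measurable D ->
     `|Ip Q (fun x : T => u x.2.2 * \1_(zpre D) x)| <= delta) ->
  `|Ip Q (fun x : T => u x.2.2 * w x.2.2 * \1_(zpre C) x)| <= delta.
Proof.
move=> mu u1 gw mC hD.
pose U := [set z | 0 < u z].
have mU : measurable U by exact: mgt.
have mDp : measurable (C `&` U) by exact: measurableI.
have mDm : measurable (C `&` ~` U) by apply: measurableI => //; exact: measurableC.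
have bu : bm (fun x : T => u x.2.2).
  by split; [exact: (measurableT_comp mu mz) | exists 1 => x; exact: u1].
have bw := bmz gw.
have bi D : measurable D -> bm (\1_(zpre D) : T -> R).
  by move=> mD; exact: bm_indic (mzpre mD).
pose Fp := fun x : T => u x.2.2 * w x.2.2 * \1_(zpre (C `&` U)) x.
pose Fm := fun x : T => u x.2.2 * w x.2.2 * \1_(zpre (C `&` ~` U)) x.
pose Gp := fun x : T => u x.2.2 * \1_(zpre (C `&` U)) x.
pose Gm := fun x : T => u x.2.2 * \1_(zpre (C `&` ~` U)) x.
have -> : (fun x : T => u x.2.2 * w x.2.2 * \1_(zpre C) x) = (fun x => Fp x + Fm x).
  apply/funext => x; rewrite /Fp /Fm !indz.
  by case: (split_ind C U x.2.2) => [[-> [-> _]]|[-> [-> _]]]; ring.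
have bFp : bm Fp by apply: bmM; [exact: bmM|exact: bi].
have bFm : bm Fm by apply: bmM; [exact: bmM|exact: bi].
have bGp : bm Gp by apply: bmM; [exact: bu|exact: bi].
have bGm : bm Gm by apply: bmM; [exact: bu|exact: bi].
have h1 : 0 <= Ip Q Fp.
  rewrite -(Ip_cst Q 0); apply: Ip_le => //; first exact: bm_cst.
  move=> x; rewrite /Fp indz; have /andP[w0 w1] := gw.2 x.2.2.
  case: (split_ind C U x.2.2) => [[-> [_ Ux]]|[_ [-> _]]]; last by rewrite mulr0.
  have Ux' : 0 < u x.2.2 := Ux.
  by case: (ind01 C x.2.2) => ->; nra.
have h2 : Ip Q Fp <= Ip Q Gp.
  apply: Ip_le => // x; rewrite /Fp /Gp indz; have /andP[w0 w1] := gw.2 x.2.2.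
  case: (split_ind C U x.2.2) => [[-> [_ Ux]]|[_ [-> _]]]; last by rewrite !mulr0.
  have Ux' : 0 < u x.2.2 := Ux.
  by case: (ind01 C x.2.2) => ->; nra.
have h3 : Ip Q Gp <= delta.
  by apply: le_trans (hD _ mDp); exact: ler_norm.
have h4 : Ip Q Fm <= 0.
  rewrite -(Ip_cst Q 0); apply: Ip_le => //; first exact: bm_cst.
  move=> x; rewrite /Fm indz; have /andP[w0 w1] := gw.2 x.2.2.
  case: (split_ind C U x.2.2) => [[_ [-> _]]|[-> [_ Ux]]]; first by rewrite mulr0.
  have Ux' : u x.2.2 <= 0 by rewrite leNgt; apply/negP.
  by case: (ind01 C x.2.2) => ->; nra.
have h5 : Ip Q Gm <= Ip Q Fm.
  apply: Ip_le => // x; rewrite /Fm /Gm indz; have /andP[w0 w1] := gw.2 x.2.2.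
  case: (split_ind C U x.2.2) => [[_ [-> _]]|[-> [_ Ux]]]; first by rewrite !mulr0.
  have Ux' : u x.2.2 <= 0 by rewrite leNgt; apply/negP.
  by case: (ind01 C x.2.2) => ->; nra.
have h6 : - delta <= Ip Q Gm.
  by have := hD _ mDm; rewrite ler_norml => /andP[].
rewrite IpD// ler_norml; apply/andP; split; lra.
Qed.

End Main2.

Section Main3.
Context {dS dW dZ : measure_display}
  {S : measurableType dS} {W : measurableType dW} {Z : measurableType dZ}
  {R : realType}.
Local Notation T := (@triple dS dW dZ S W Z).

Lemma good_indic (a : Z -> R) D : good a -> measurable D ->
  measurable_fun setT (fun x : T => a x.2.2 * \1_(zpre D) x) /\
  forall x : T, 0 <= a x.2.2 * \1_(zpre D) x <= 1.
Proof.
move=> ga mD; split.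
  apply: measurable_funM; first exact: (measurableT_comp ga.1 mz).
  by apply: measurable_indic; exact: mzpre.
move=> x; have /andP[a0 a1] := ga.2 x.2.2.
by rewrite indz; case: (@ind01 _ _ R D x.2.2) => ->; rewrite ?mulr0 ?mulr1 ?lexx ?ler01// a0 a1.
Qed.

Lemma KL (Q pi : probability T R) E (a ak : Z -> R) eps : measurable E ->
  good a -> is_condprob pi E a -> good ak -> is_condprob Q E ak ->
  (forall G, measurable G -> `|fine (Q G) - fine (pi G)| <= eps) ->
  forall D, measurable D ->
  `|Ip Q (fun x : T => (ak x.2.2 - a x.2.2) * \1_(zpre D) x)| <= eps + eps.
Proof.
move=> mE ga va gak vak hG D mD.
have bi := bm_indic (mzpre mD) : bm (\1_(zpre D) : T -> R).
have -> : (fun x : T => (ak x.2.2 - a x.2.2) * \1_(zpre D) x) =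
  (fun x => ak x.2.2 * \1_(zpre D) x - a x.2.2 * \1_(zpre D) x).
  by apply/funext => x; rewrite mulrBl.
rewrite IpB; [|exact: bmM (bmz gak) bi|exact: bmM (bmz ga) bi].
rewrite (Conv gak vak mD).
have e1 := Conv ga va mD.
have [mF F01] := good_indic ga mD.
have e2 := T2 hG mF F01.
have e3 := hG _ (measurableI _ _ mE (mzpre mD)).
move: e2 e3; rewrite e1 !ler_norml => /andP[h1 h2] /andP[h3 h4].
apply/andP; split; lra.
Qed.

End Main3.

Section Main4.
Context {dS dW dZ : measure_display}
  {S : measurableType dS} {W : measurableType dW} {Z : measurableType dZ}
  {R : realType}.
Local Notation T := (@triple dS dW dZ S W Z).

Lemma mEA (A : set S) : measurable A -> measurable [set x : T | A x.1].
Proof.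
move=> mA; rewrite (_ : [set x : T | A x.1] = A `*` setT).
  exact: measurableX.
by apply/seteqP; split => x /=; [move=> ?; split|case].
Qed.

Lemma mEB (B : set W) : measurable B -> measurable [set x : T | B x.2.1].
Proof.
move=> mB; rewrite (_ : [set x : T | B x.2.1] = setT `*` (B `*` setT)).
  by apply: measurableX => //; exact: measurableX.
by apply/seteqP; split => x /=; [move=> ?; split|case => _ []].
Qed.

Lemma mEAB (A : set S) (B : set W) : measurable A -> measurable B ->
  measurable [set x : T | A x.1 /\ B x.2.1].
Proof.
move=> mA mB; rewrite (_ : [set x : T | A x.1 /\ B x.2.1] = A `*` (B `*` setT)).
  by apply: measurableX => //; exact: measurableX.
by apply/seteqP; split => x /=; [case=> ? ?; split|case => ? []].
Qed.

Lemma MC (pik : nat -> probability T R) (pi : probability T R)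
    (A : set S) (B : set W) (a b c : Z -> R) :
  (forall k, cond_indep_SW_Z (pik k)) -> tv_converges pik pi ->
  measurable A -> measurable B -> good a -> good b -> good c ->
  is_condprob pi [set x : T | A x.1] a -> is_condprob pi [set x : T | B x.2.1] b ->
  is_condprob pi [set x : T | A x.1 /\ B x.2.1] c ->
  forall C, measurable C ->
  Ip pi (fun x => c x.2.2 * \1_(zpre C) x) =
  Ip pi (fun x => a x.2.2 * b x.2.2 * \1_(zpre C) x).
Proof.
move=> HCI HTV mA mB ga gb gc va vb vc C mC.
have mA' := mEA mA; have mB' := mEB mB; have mAB := mEAB mA mB.
apply/eqP; rewrite -subr_eq0 -normr_eq0 eq_le normr_ge0 andbT.
apply/ler_addgt0Pr => e e0; rewrite add0r.
have e6 : 0 < e / 6 by rewrite divr_gt0.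
have [k hk] := TVeps HTV e6.
have [ak [gak vak]] := exists_good (pik k) mA'.
have [bk [gbk vbk]] := exists_good (pik k) mB'.
have [ck [gck vck]] := exists_good (pik k) mAB.
have hae := HCI k A B mA mB ak bk ck vak vbk vck.
have bC := bm_indic (mzpre mC) : bm (\1_(zpre C) : T -> R).
have e1 := Conv gc vc mC.
have e2 := Conv gck vck mC.
have e3 : Ip (pik k) (fun x => ck x.2.2 * \1_(zpre C) x) =
          Ip (pik k) (fun x => ak x.2.2 * bk x.2.2 * \1_(zpre C) x).
  apply: Ip_ae.
  - exact: bmM (bmz gck) bC.
  - exact: bmM (bmM (bmz gak) (bmz gbk)) bC.
  - by apply: filterS hae => x ->.
have bu (f g : Z -> R) : good f -> good g ->
    measurable_fun setT (fun z => f z - g z) /\ forall z, `|f z - g z| <= 1.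
  move=> [mf f01] [mg g01]; split; first exact: measurable_funB.
  move=> z; have /andP[? ?] := f01 z; have /andP[? ?] := g01 z.
  rewrite ler_norml; apply/andP; split; lra.
have [mu1 u1] := bu _ _ gak ga.
have [mu2 u2] := bu _ _ gbk gb.
have w1 := WL mu1 u1 gbk mC (KL mA' ga va gak vak hk).
have w2 := WL mu2 u2 ga mC (KL mB' gb vb gbk vbk hk).
have e4 : Ip (pik k) (fun x => ak x.2.2 * bk x.2.2 * \1_(zpre C) x) -
          Ip (pik k) (fun x => a x.2.2 * b x.2.2 * \1_(zpre C) x) =
          Ip (pik k) (fun x => (ak x.2.2 - a x.2.2) * bk x.2.2 * \1_(zpre C) x) +
          Ip (pik k) (fun x => (bk x.2.2 - b x.2.2) * a x.2.2 * \1_(zpre C) x).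
  have bu1 : bm (fun x : T => ak x.2.2 - a x.2.2) by exact: bmB (bmz gak) (bmz ga).
  have bu2 : bm (fun x : T => bk x.2.2 - b x.2.2) by exact: bmB (bmz gbk) (bmz gb).
  rewrite -IpB; last exact: bmM (bmM (bmz ga) (bmz gb)) bC.
    rewrite -IpD; [|exact: bmM (bmM bu1 (bmz gbk)) bC|exact: bmM (bmM bu2 (bmz ga)) bC].
    by congr Ip; apply/funext => x; ring.
  exact: bmM (bmM (bmz gak) (bmz gbk)) bC.
have [mF F01] : measurable_fun setT (fun x : T => a x.2.2 * b x.2.2 * \1_(zpre C) x) /\
    forall x : T, 0 <= a x.2.2 * b x.2.2 * \1_(zpre C) x <= 1.
  have [mF' F01'] := @good_indic _ _ _ S W _ _ b C gb mC.
  split.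
    apply: measurable_funM; last by apply: measurable_indic; exact: mzpre.
    apply: measurable_funM; [exact: (measurableT_comp ga.1 mz)|exact: (measurableT_comp gb.1 mz)].
  move=> x; have /andP[? ?] := ga.2 x.2.2; have /andP[? ?] := F01' x.
  rewrite -mulrA; apply/andP; split; first exact: mulr_ge0.
  by rewrite -[1]mul1r ler_pM.
have e5 := T2 hk mF F01.
have e7 := hk _ (measurableI _ _ mAB (mzpre mC)).
move: e4 e5 e7 w1 w2; rewrite e1 -e2 e3.
set p1 := Ip (pik k) (fun x => ak x.2.2 * bk x.2.2 * _).
set p2 := Ip (pik k) (fun x => a x.2.2 * b x.2.2 * _).
set p3 := Ip pi (fun x => a x.2.2 * b x.2.2 * _).
rewrite !ler_norml => e4 /andP[h1 h2] /andP[h3 h4] /andP[h5 h6] /andP[h7 h8].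
apply/andP; split; lra.
Qed.

End Main4.

Section Final.
Context {dS dW dZ : measure_display}
  {S : measurableType dS} {W : measurableType dW} {Z : measurableType dZ}
  {R : realType}.
Local Notation T := (@triple dS dW dZ S W Z).

Lemma final_step (pi : probability T R) (a b c : Z -> R) :
  good a -> good b -> good c ->
  (forall C, measurable C ->
    Ip pi (fun x => c x.2.2 * \1_(zpre C) x) =
    Ip pi (fun x => a x.2.2 * b x.2.2 * \1_(zpre C) x)) ->
  {ae pi, forall x : T, c x.2.2 = a x.2.2 * b x.2.2}.
Proof.
move=> ga gb gc MCC.
have mf : measurable_fun setT (fun z => c z - a z * b z).
  apply: measurable_funB; first exact: gc.1.
  by apply: measurable_funM; [exact: ga.1|exact: gb.1].
have mg : measurable_fun setT (fun z => a z * b z - c z).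
  apply: measurable_funB; last exact: gc.1.
  by apply: measurable_funM; [exact: ga.1|exact: gb.1].
pose C1 := [set z | 0 < c z - a z * b z].
pose C2 := [set z | 0 < a z * b z - c z].
have mC1 : measurable C1 by exact: mgt.
have mC2 : measurable C2 by exact: mgt.
have bab : bm (fun x : T => a x.2.2 * b x.2.2) by exact: bmM (bmz ga) (bmz gb).
have bc : bm (fun x : T => c x.2.2) by exact: bmz.
have key (C : set Z) (s : R) : measurable C ->
    Ip pi (fun x : T => s * (c x.2.2 - a x.2.2 * b x.2.2) * \1_(zpre C) x) = 0.
  move=> mC; have bi := bm_indic (mzpre mC) : bm (\1_(zpre C) : T -> R).
  rewrite (_ : (fun x : T => _) = (fun x => s * (c x.2.2 * \1_(zpre C) x) -
      s * (a x.2.2 * b x.2.2 * \1_(zpre C) x))); last first.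
    by apply/funext => x; ring.
  rewrite IpB; [|exact: bmM (bm_cst s) (bmM bc bi)|exact: bmM (bm_cst s) (bmM bab bi)].
  rewrite !IpZ; [|exact: bmM bab bi|exact: bmM bc bi].
  by rewrite MCC// subrr.
have P1 : pi (zpre C1) = 0%E.
  apply: (@G0 _ _ _ pi _ (fun x : T => c x.2.2 - a x.2.2 * b x.2.2)).
  - exact: mzpre.
  - by apply: integrableS (bm_int pi (bmB bc bab)) => //; exact: mzpre.
  - by move=> x.
  - rewrite Ip_set; [|exact: bmB bc bab|exact: mzpre].
    have := key C1 1 mC1.
    under [X in Ip _ X = _ -> _]eq_fun do rewrite mul1r.
    by move=> ->.
have P2 : pi (zpre C2) = 0%E.
  apply: (@G0 _ _ _ pi _ (fun x : T => a x.2.2 * b x.2.2 - c x.2.2)).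
  - exact: mzpre.
  - by apply: integrableS (bm_int pi (bmB bab bc)) => //; exact: mzpre.
  - by move=> x.
  - rewrite Ip_set; [|exact: bmB bab bc|exact: mzpre].
    have := key C2 (-1) mC2.
    under [X in Ip _ X = _ -> _]eq_fun do rewrite mulN1r opprB.
    by move=> ->.
exists (zpre C1 `|` zpre C2); split.
- by apply: measurableU; exact: mzpre.
- by rewrite measureU0//; exact: mzpre.
- move=> x /= hx; rewrite /zpre /C1 /C2 /=.
  have [h0|h0] := ltP 0 (c x.2.2 - a x.2.2 * b x.2.2); first by left.
  have [h1|h1] := ltP 0 (a x.2.2 * b x.2.2 - c x.2.2); first by right.
  by exfalso; apply: hx; lra.
Qed.

End Final.

Unset Implicit Arguments.
Theorem mainTheorem9 (dS dW dZ : measure_display)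
  (S : measurableType dS) (W : measurableType dW) (Z : measurableType dZ)
  (R : realType)
  (pik : nat -> probability (S * (W * Z))%type R)
  (pi : probability (S * (W * Z))%type R) :
  (forall k, cond_indep_SW_Z (pik k)) ->
  tv_converges pik pi ->
  cond_indep_SW_Z pi.
Proof.
move=> HCI HTV A B mA mB hA hB hAB vA vB vAB.
have mA' := @mEA _ _ _ S W Z A mA.
have mB' := @mEB _ _ _ S W Z B mB.
have mAB := @mEAB _ _ _ S W Z A B mA mB.
have [cA aeA] := clip_version mA' vA.
have [cB aeB] := clip_version mB' vB.
have [cAB aeAB] := clip_version mAB vAB.
have ga := good_clip vA.1.
have gb := good_clip vB.1.
have gc := good_clip vAB.1.
have MCC := MC HCI HTV mA mB ga gb gc cA cB cAB.
have aec := final_step ga gb gc MCC.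
have FF : Filter (nbhs (almost_everywhere pi)) by exact: ae_filter_ringOfSetsType.
have h1 := filterS2 FF (fun x (p : hA x.2.2 = clip hA x.2.2) (q : hB x.2.2 = clip hB x.2.2) => conj p q) aeA aeB.
have h2 := filterS2 FF (fun x (p : hAB x.2.2 = clip hAB x.2.2)
  (q : clip hAB x.2.2 = clip hA x.2.2 * clip hB x.2.2) => conj p q) aeAB aec.
have H (x : (S * (W * Z))%type) :
  hA x.2.2 = clip hA x.2.2 /\ hB x.2.2 = clip hB x.2.2 ->
  hAB x.2.2 = clip hAB x.2.2 /\ clip hAB x.2.2 = clip hA x.2.2 * clip hB x.2.2 ->
  hAB x.2.2 = hA x.2.2 * hB x.2.2.
  by move=> [p1 p2] [p3 p4]; rewrite p3 p4 p1 p2.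
have h3 := filterS2 FF (fun x (p : hA x.2.2 = clip hA x.2.2 /\ hB x.2.2 = clip hB x.2.2)
  (q : hAB x.2.2 = clip hAB x.2.2 /\ clip hAB x.2.2 = clip hA x.2.2 * clip hB x.2.2) => H x p q) h1 h2.
exact: h3.
Qed.
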